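(* Let $T$ be an order tree of height at most $\omega_1$ and $G$ a sparse $T$-graph. Then all the pairwise disjoint horizontal rays $R_t$ ($t\in T$) of the ray inflation $G\sharp\mathbb{N}$ belong to the same end $\varepsilon$, which is the only end of $G\sharp\mathbb{N}$; in particular $\deg(\varepsilon)=|T|$.
   Context: An order tree is a partial order $(T,\le)$ with a unique minimal element (the root) in which every set $\{t' : t'\le t\}$ is well-ordered; the height of $t$ is the order type of $\{t' : t'<t\}$; the height of $T$ is the supremum of the order types of its maximal chains. $t$ is a successor of $t'$ (its predecessor) if $t'<t$ with nothing strictly between; otherwise $t$ is a limit. A $T$-graph is a graph $G$ with $V(G)=T$ whose edges join comparable points and in which for every $t$ the neighbours of $t$ below $t$ (its down-neighbours) are cofinal in $\{s : s<t\}$. $G$ is sparse if the set of down-neighbours of each $t$ has order type $\mathrm{cf}(\{s : s<t\})$; for height at most $\omega_1$, this means a successor's only down-neighbour is its predecessor and a non-root limit's down-neighbours form a cofinal $\omega$-sequence below it. The ray inflation $G\sharp\mathbb{N}$ has vertex set $T\times\mathbb{N}$ and edges: $(t,n)(t,n+1)$ for all $t,n$ (so $R_t$, the subgraph on $\{t\}\times\mathbb{N}$, is a ray, the horizontal ray); $(t,n)(t',n)$ for all $n$ if $t$ is a successor with predecessor $t'$; $(t,n)(t_n,n)$ for all $n$ if $t$ is a non-root limit with down-neighbours $t_0<t_1<\cdots$. Ends are equivalence classes of rays, two rays being equivalent if there are infinitely many disjoint paths between them; the degree of an end is the maximum number of disjoint rays in it. *)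

(* Defs.v *)
From Stdlib Require Import List.
Import ListNotations.
Set Implicit Arguments.

Section Trees.
Variable T : Type.
Variable le : T -> T -> Prop.

Definition lt (s t : T) : Prop := le s t /\ s <> t.

Definition well_ordered_on (P : T -> Prop) : Prop :=
  (forall x y, P x -> P y -> le x y \/ le y x) /\
  (forall Q : T -> Prop, (exists x, P x /\ Q x) ->
     exists m, P m /\ Q m /\ forall y, P y -> Q y -> le m y).

Definition minimal (r : T) : Prop := forall s, le s r -> s = r.

Definition order_tree : Prop :=
  (forall x, le x x) /\
  (forall x y, le x y -> le y x -> x = y) /\
  (forall x y z, le x y -> le y z -> le x z) /\
  (exists r, minimal r /\ forall r', minimal r' -> r' = r) /\
  (forall t, well_ordered_on (fun s => le s t)).

Definition is_root (r : T) : Prop := minimal r.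

Definition countable_set (P : T -> Prop) : Prop :=
  exists f : T -> nat, forall x y, P x -> P y -> f x = f y -> x = y.

(* height at most omega_1: every maximal chain has order type <= omega_1,
   equivalently every strict down-set {s | s < t} (a well-order) has
   countable order type, i.e. is countable. *)
Definition height_le_omega1 : Prop :=
  forall t, countable_set (fun s => lt s t).

Definition pred_of (t' t : T) : Prop :=
  lt t' t /\ ~ (exists u, lt t' u /\ lt u t).

Definition is_successor (t : T) : Prop := exists t', pred_of t' t.
Definition nonroot_limit (t : T) : Prop := ~ is_root t /\ ~ is_successor t.

Variable G : T -> T -> Prop.

Definition simple_graph {V : Type} (E : V -> V -> Prop) : Prop :=
  (forall x y, E x y -> E y x) /\ (forall x, ~ E x x).

Definition down_nb (s t : T) : Prop := lt s t /\ G s t.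

Definition T_graph : Prop :=
  simple_graph G /\
  (forall s t, G s t -> le s t \/ le t s) /\
  (forall s t, lt s t -> exists u, le s u /\ lt u t /\ down_nb u t).

Definition omega_enum_down_nb (t : T) (f : nat -> T) : Prop :=
  (forall n, lt (f n) (f (S n))) /\
  (forall s, down_nb s t <-> exists n, s = f n).

(* sparse T-graph, in the form stated for trees of height at most omega_1:
   a successor's only down-neighbour is its predecessor, and a non-root
   limit's down-neighbours form a cofinal omega-sequence below it
   (cofinality follows from the T-graph condition). *)
Definition sparse : Prop :=
  (forall t p, pred_of p t -> forall s, down_nb s t <-> s = p) /\
  (forall t, nonroot_limit t -> exists f, omega_enum_down_nb t f).

Definition infl_edge0 (x y : T * nat) : Prop :=
  let (t, n) := x in let (t', m) := y in
  (t' = t /\ m = S n) \/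
  (m = n /\ pred_of t' t) \/
  (m = n /\ nonroot_limit t /\
     exists f, omega_enum_down_nb t f /\ t' = f n).

Definition ray_inflation (x y : T * nat) : Prop :=
  infl_edge0 x y \/ infl_edge0 y x.

Definition horizontal_ray (t : T) : nat -> T * nat := fun n => (t, n).

End Trees.

Section Ends.
Variable V : Type.
Variable E : V -> V -> Prop.

Definition is_ray (r : nat -> V) : Prop :=
  (forall m n, r m = r n -> m = n) /\ (forall n, E (r n) (r (S n))).

Inductive walk : V -> V -> list V -> Prop :=
| walk_one x : walk x x [x]
| walk_cons x y z l : E x y -> walk y z l -> walk x z (x :: l).

Definition is_path (x y : V) (l : list V) : Prop := walk x y l /\ NoDup l.

Definition ray_equiv (r1 r2 : nat -> V) : Prop :=
  exists P : nat -> list V,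
    (forall k, exists a b, is_path (r1 a) (r2 b) (P k)) /\
    (forall k k', k <> k' -> forall v, In v (P k) -> ~ In v (P k')).

Definition disjoint_family {I : Type} (F : I -> nat -> V) : Prop :=
  forall i j, i <> j -> forall m n, F i m <> F j n.

(* the end of the ray r0 has degree |A|: the maximum number of disjoint rays
   in it is |A| (there is a family of |A| disjoint rays in it, and every
   family of disjoint rays in it injects into A) *)
Definition end_degree_is (r0 : nat -> V) (A : Type) : Prop :=
  (exists F : A -> nat -> V,
     (forall a, is_ray (F a) /\ ray_equiv (F a) r0) /\ disjoint_family F) /\
  (forall (I : Type) (F : I -> nat -> V),
     (forall i, is_ray (F i) /\ ray_equiv (F i) r0) -> disjoint_family F ->
     exists g : I -> A, forall i j, g i = g j -> i = j).
End Ends.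

(* Main.v *)
Require Import Defs.
From Stdlib Require Import Arith List Lia Classical ClassicalEpsilon Cantor.
From mathcomp Require classical_sets.
Import ListNotations.

Lemma walk_head {V} (E : V -> V -> Prop) x y l : walk E x y l -> In x l.
Proof. intros H; destruct H; simpl; auto. Qed.

Lemma walk_last {V} (E : V -> V -> Prop) x y l : walk E x y l -> In y l.
Proof. intros H; induction H; simpl; auto. Qed.

Lemma walk_app {V} (E : V -> V -> Prop) x y z l1 l2 :
  walk E x y l1 -> walk E y z l2 -> exists l, walk E x z l /\ incl l (l1 ++ l2).
Proof.
  intros H1; revert z l2; induction H1; intros z' l2 H2.
  - exists l2; split; auto. intros v Hv; simpl; auto.
  - destruct (IHwalk z' l2 H2) as [l' [Hw Hi]].
    exists (x :: l'); split. econstructor; eauto.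
    intros v [Hv|Hv]; [subst; simpl; auto|]. simpl; right; auto.
Qed.

Lemma walk_rev {V} (E : V -> V -> Prop) (Hs : forall a b, E a b -> E b a) x y l :
  walk E x y l -> exists l', walk E y x l' /\ incl l' l.
Proof.
  intros H; induction H.
  - exists [x]; split; [constructor|]. intros v Hv; auto.
  - destruct IHwalk as [l' [Hw Hi]].
    assert (Hw2 : walk E y x [y; x]) by (econstructor; [apply Hs; eauto| constructor]).
    destruct (walk_app E _ _ _ _ _ Hw Hw2) as [l2 [Hw3 Hi3]].
    exists l2; split; auto. intros v Hv. apply Hi3 in Hv.
    apply in_app_or in Hv; destruct Hv as [Hv|[Hv|[Hv|[]]]].
    + right; auto.
    + subst; right; eapply walk_head; eauto.
    + subst; left; auto.
Qed.

Lemma walk_split {V} (E : V -> V -> Prop) y z l1 x l2 :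
  walk E y z (l1 ++ x :: l2) -> walk E x z (x :: l2).
Proof.
  revert y; induction l1; intros y H; simpl in H.
  - inversion H; subst; [constructor| econstructor; eauto].
  - inversion H; subst.
    + destruct l1; discriminate.
    + eauto.
Qed.

Lemma walk_to_path {V} (E : V -> V -> Prop) x y l :
  walk E x y l -> exists l', is_path E x y l' /\ incl l' l.
Proof.
  intros H; induction H.
  - exists [x]; split; [split; [constructor| repeat constructor; simpl; tauto]|].
    intros v Hv; auto.
  - destruct IHwalk as [l' [[Hw Hn] Hi]].
    destruct (classic (In x l')) as [Hx|Hx].
    + apply in_split in Hx. destruct Hx as [l1 [l2 Heq]]. subst l'.
      exists (x :: l2). split; [split|].
      * eapply walk_split; eauto.
      * apply NoDup_app_remove_l in Hn; exact Hn.
      * intros v [Hv|Hv]; [left; auto|]. right. apply Hi. apply in_or_app; right; right; auto.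
    + exists (x :: l'); split; [split|].
      * econstructor; eauto.
      * constructor; auto.
      * intros v [Hv|Hv]; [left; auto| right; auto].
Qed.
Fixpoint accum {V} (ch : list V -> list V) (k : nat) : list V :=
  match k with 0 => [] | S k => accum ch k ++ ch (accum ch k) end.

Lemma accum_incl {V} (ch : list V -> list V) k k' :
  k < k' -> incl (ch (accum ch k)) (accum ch k').
Proof.
  induction k'; intros Hk; [lia|].
  simpl. destruct (Nat.eq_dec k k') as [->|Hne].
  - intros v Hv; apply in_or_app; right; auto.
  - intros v Hv; apply in_or_app; left; apply IHk'; auto; lia.
Qed.

Lemma equiv_of_avoid {V} (E : V -> V -> Prop) (r1 r2 : nat -> V) :
  (forall S : list V, exists l, (exists a b, is_path E (r1 a) (r2 b) l) /\
     forall v, In v l -> ~ In v S) -> ray_equiv E r1 r2.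
Proof.
  intros H.
  pose (ch := fun S => proj1_sig (constructive_indefinite_description _ (H S))).
  assert (Hch : forall S, (exists a b, is_path E (r1 a) (r2 b) (ch S)) /\
     forall v, In v (ch S) -> ~ In v S).
  { intros S; unfold ch; destruct (constructive_indefinite_description _ (H S)); auto. }
  exists (fun k => ch (accum ch k)). split.
  - intros k; apply Hch.
  - assert (Hd : forall k k', k < k' -> forall v, In v (ch (accum ch k)) -> ~ In v (ch (accum ch k'))).
    { intros k k' Hk v Hv Hv'. apply (proj2 (Hch _) v Hv'). apply (accum_incl ch k k' Hk); auto. }
    intros k k' Hne v Hv Hv'.
    destruct (Nat.lt_gt_cases k k') as [[Hl|Hl] _]; [lia| |].
    + eapply Hd; eauto.
    + eapply Hd; eauto.
Qed.

Lemma pigeon {V} (f : nat -> V) (Hf : forall m n, f m = f n -> m = n) (L : list V) :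
  exists a, ~ In (f a) L.
Proof.
  apply NNPP; intro Hn.
  assert (Hall : forall a, In (f a) L).
  { intros a; apply NNPP; intro Ha; apply Hn; eauto. }
  assert (Hnd : NoDup (map f (seq 0 (S (length L))))).
  { apply NoDup_map_NoDup_ForallPairs. intros a b _ _; auto. apply seq_NoDup. }
  assert (Hi : incl (map f (seq 0 (S (length L)))) L).
  { intros v Hv. apply in_map_iff in Hv. destruct Hv as [a [<- _]]; auto. }
  pose proof (NoDup_incl_length Hnd Hi) as Hl.
  rewrite length_map, length_seq in Hl. lia.
Qed.
Lemma acc_all {T} (le : T -> T -> Prop) : order_tree le -> forall t, Acc (Defs.lt le) t.
Proof.
  intros [Hr [Ha [Htr [_ Hwo]]]] t. apply NNPP; intro HnA.
  destruct (Hwo t) as [_ Hmin].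
  destruct (Hmin (fun s => ~ Acc (Defs.lt le) s)) as [m [Hmt [Hm Hleast]]].
  { exists t; split; auto. }
  apply Hm. constructor. intros y [Hym Hne]. apply NNPP; intro Hy.
  apply Hne. apply Ha; auto. apply Hleast; auto. eapply Htr; eauto.
Qed.

Lemma infl_sym {T} (le G : T -> T -> Prop) x y :
  ray_inflation le G x y -> ray_inflation le G y x.
Proof. unfold ray_inflation; tauto. Qed.

Lemma descent {T} (le G : T -> T -> Prop) : order_tree le -> sparse le G ->
  forall r, (forall r', minimal le r' -> r' = r) ->
  forall u n, exists l, walk (ray_inflation le G) (u,n) (r,n) l /\ forall v, In v l -> snd v = n.
Proof.
  intros OT [Hsucc Hlim] r Hru u n.
  induction (acc_all le OT u) as [u _ IH].
  destruct (classic (is_root le u)) as [Hroot|Hnr].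
  - apply Hru in Hroot; subst u. exists [(r,n)]; split; [constructor|].
    intros v [<-|[]]; reflexivity.
  - destruct (classic (is_successor le u)) as [[p Hp]|Hns].
    + destruct (IH p (proj1 Hp)) as [l [Hw Hl]].
      exists ((u,n) :: l); split.
      * econstructor; [|exact Hw]. left. simpl. right; left; auto.
      * intros v [<-|Hv]; auto.
    + destruct (Hlim u (conj Hnr Hns)) as [f Hf].
      assert (Hd : down_nb le G (f n) u) by (apply (proj2 Hf); eauto).
      destruct (IH (f n) (proj1 Hd)) as [l [Hw Hl]].
      exists ((u,n) :: l); split.
      * econstructor; [|exact Hw]. left. simpl. right; right; split; auto.
        split; [split; auto|]. exists f; auto.
      * intros v [<-|Hv]; auto.
Qed.

Lemma horiz_walk {T} (le G : T -> T -> Prop) s : forall k m,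
  exists l, walk (ray_inflation le G) (s,m) (s,k+m) l /\ forall v, In v l -> fst v = s /\ m <= snd v.
Proof.
  induction k; intros m.
  - exists [(s,m)]; split; [constructor|]. intros v [<-|[]]; simpl; auto.
  - destruct (IHk (S m)) as [l [Hw Hl]].
    replace (k + S m) with (S k + m) in Hw by lia.
    exists ((s,m) :: l); split.
    + econstructor; [|exact Hw]. left; simpl; left; auto.
    + intros v [<-|Hv]; simpl; auto. destruct (Hl v Hv); split; auto; lia.
Qed.

Lemma avoid_lemma {T} (le G : T -> T -> Prop) : order_tree le -> sparse le G ->
  forall r, (forall r', minimal le r' -> r' = r) ->
  forall (rho : nat -> T * nat), is_ray (ray_inflation le G) rho ->
  forall t (S : list (T * nat)), exists l,
    (exists a b, walk (ray_inflation le G) (rho a) (t, b) l) /\ forall v, In v l -> ~ In v S.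
Proof.
  intros OT SP r Hru rho [Hinj _] t S.
  set (M := Datatypes.S (list_max (map snd S))).
  assert (HS : forall v, In v S -> snd v < M).
  { intros v Hv. unfold M.
    assert (H1 : list_max (map snd S) <= list_max (map snd S)) by lia.
    apply list_max_le in H1. rewrite Forall_forall in H1.
    specialize (H1 (snd v) (in_map _ _ _ Hv)). lia. }
  destruct (pigeon rho Hinj (list_prod (map fst S) (seq 0 M))) as [a Ha].
  destruct (rho a) as [s m] eqn:Hra.
  destruct (horiz_walk le G s M m) as [l1 [Hw1 Hl1]].
  destruct (descent le G OT SP r Hru s (M+m)) as [l2 [Hw2 Hl2]].
  destruct (descent le G OT SP r Hru t (M+m)) as [l3 [Hw3 Hl3]].
  destruct (walk_rev _ (infl_sym le G) _ _ _ Hw3) as [l3' [Hw3' Hi3]].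
  destruct (walk_app _ _ _ _ _ _ Hw2 Hw3') as [l4 [Hw4 Hi4]].
  destruct (walk_app _ _ _ _ _ _ Hw1 Hw4) as [l5 [Hw5 Hi5]].
  exists l5; split.
  - exists a, (M+m). rewrite Hra. exact Hw5.
  - intros v Hv HvS. apply Hi5 in Hv. apply in_app_or in Hv. destruct Hv as [Hv|Hv].
    + destruct (Hl1 v Hv) as [Hf Hs]. pose proof (HS v HvS) as Hlt.
      apply Ha. apply in_prod.
      * rewrite <- Hf. apply in_map; auto.
      * apply in_seq. lia.
    + apply Hi4 in Hv. apply in_app_or in Hv. pose proof (HS v HvS) as Hlt.
      destruct Hv as [Hv|Hv].
      * rewrite (Hl2 v Hv) in Hlt. lia.
      * apply Hi3 in Hv. rewrite (Hl3 v Hv) in Hlt. lia.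
Qed.

Lemma equiv_lemma {T} (le G : T -> T -> Prop) : order_tree le -> sparse le G ->
  forall (rho : nat -> T * nat), is_ray (ray_inflation le G) rho ->
  forall t, ray_equiv (ray_inflation le G) rho (horizontal_ray t).
Proof.
  intros OT SP rho Hr t.
  pose proof OT as OT'. destruct OT' as [a1 [a2 [a3 [[r [_ Hru]] a5]]]].
  apply equiv_of_avoid. intros S.
  destruct (avoid_lemma le G OT SP r Hru rho Hr t S) as [l [[a [b Hw]] Hav]].
  destruct (walk_to_path _ _ _ _ Hw) as [l' [Hp Hi]].
  exists l'; split.
  - exists a, b. exact Hp.
  - intros v Hv; apply Hav; auto.
Qed.
Lemma zorn_sets (X : Type) (P : (X -> Prop) -> Prop) :
  (forall F : (X -> Prop) -> Prop, (forall A, F A -> P A) ->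
     (forall A B, F A -> F B -> (forall x, A x -> B x) \/ (forall x, B x -> A x)) ->
     P (fun x => exists2 A, F A & A x)) ->
  exists A, P A /\ forall B, (forall x, A x -> B x) -> ~ (forall x, B x -> A x) -> ~ P B.
Proof.
  intros H. destruct ((@classical_sets.Zorn_bigcup X P)) as [A [HA Hmax]].
  - intros F HF Htot. apply H; auto.
  - exists A; split; auto. intros B H1 H2. apply Hmax. split; auto.
Qed.

Fixpoint idx {T} (x : T) (l : list T) : nat :=
  match l with
  | [] => 0
  | y :: l => if excluded_middle_informative (x = y) then 0 else S (idx x l)
  end.

Lemma idx_inj {T} (l : list T) x x' : In x l -> In x' l -> idx x l = idx x' l -> x = x'.
Proof.
  induction l as [|y l IH]; simpl; [tauto|].
  destruct (excluded_middle_informative (x = y)) as [e|n];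
  destruct (excluded_middle_informative (x' = y)) as [e'|n']; intros Hx Hx' Heq.
  - congruence.
  - discriminate.
  - discriminate.
  - injection Heq; intros; apply IH; auto; [destruct Hx|destruct Hx']; auto; congruence.
Qed.

Lemma idx_lt {T} (l : list T) x : In x l -> idx x l < length l.
Proof.
  induction l as [|y l IH]; simpl; [tauto|].
  destruct (excluded_middle_informative (x = y)); intros H; [lia|].
  destruct H; [congruence|]. specialize (IH H); lia.
Qed.

Lemma cpair_ex : {f : nat * nat -> nat | forall p q, f p = f q -> p = q}.
Proof. exists to_nat. exact to_nat_inj. Qed.
Definition cpair := proj1_sig cpair_ex.
Lemma cpair_inj p q : cpair p = cpair q -> p = q.
Proof. unfold cpair; destruct cpair_ex; auto. Qed.

Definition goodR {T} (R : T * nat * T -> Prop) : Prop :=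
  (forall a n y, R (a,n,y) -> forall n', exists y', R (a,n',y')) /\
  (forall a n y y', R (a,n,y) -> R (a,n,y') -> y = y') /\
  (forall a n a' n' y, R (a,n,y) -> R (a',n',y) -> a = a' /\ n = n') /\
  (forall a n y, R (a,n,y) -> exists n' y', R (y,n',y')).

Fixpoint pref {T} (pick : list T -> T) (k : nat) : list T :=
  match k with 0 => [] | S k => pref pick k ++ [pick (pref pick k)] end.

Lemma pref_in {T} (pick : list T -> T) k k' : k < k' -> In (pick (pref pick k)) (pref pick k').
Proof.
  induction k'; intros H; [lia|]. simpl. apply in_or_app.
  destruct (Nat.eq_dec k k') as [->|Hne]; [right; left; auto|left; apply IHk'; lia].
Qed.

Lemma card_TxN (T : Type) : (forall l : list T, exists x, ~ In x l) ->
  exists g : T * nat -> T, forall p q, g p = g q -> p = q.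
Proof.
  intros Hinf.
  destruct (zorn_sets (T * nat * T) goodR) as [A [[A1 [A2 [A3 A4]]] Hmax]].
  - intros F HF Htot. split; [|split; [|split]].
    + intros a n y [B HB Hb] n'. destruct (HF B HB) as [B1 _].
      destruct (B1 a n y Hb n') as [y' Hy']. exists y'; exists B; auto.
    + intros a n y y' [B HB Hb] [B' HB' Hb'].
      destruct (Htot B B' HB HB') as [Hs|Hs].
      * apply (proj1 (proj2 (HF B' HB')) a n); auto.
      * apply (proj1 (proj2 (HF B HB)) a n); auto.
    + intros a n a' n' y [B HB Hb] [B' HB' Hb'].
      destruct (Htot B B' HB HB') as [Hs|Hs].
      * apply (proj1 (proj2 (proj2 (HF B' HB'))) a n a' n' y); auto.
      * apply (proj1 (proj2 (proj2 (HF B HB))) a n a' n' y); auto.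
    + intros a n y [B HB Hb]. destruct (proj2 (proj2 (proj2 (HF B HB))) a n y Hb) as [n' [y' H']].
      exists n', y', B; auto.
  - set (D := fun a => exists n y, A (a,n,y)).
    assert (HLF : exists LF, forall x, ~ D x -> In x LF).
    { apply NNPP; intro Hn.
      assert (Hp : forall l, exists x, ~ D x /\ ~ In x l).
      { intros l. apply NNPP; intro Hn2. apply Hn. exists l. intros x Hx.
        apply NNPP; intro Hx2. apply Hn2; eauto. }
      set (pick := fun l => proj1_sig (constructive_indefinite_description _ (Hp l))).
      assert (Hpick : forall l, ~ D (pick l) /\ ~ In (pick l) l).
      { intros l; unfold pick; destruct (constructive_indefinite_description _ (Hp l)); auto. }
      set (e := fun k => pick (pref pick k)).
      assert (He : forall k k', e k = e k' -> k = k').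
      { intros k k' Heq. destruct (Nat.lt_trichotomy k k') as [Hl|[Hl|Hl]]; [|auto|].
        - exfalso. apply (proj2 (Hpick (pref pick k'))). fold (e k'). rewrite <- Heq.
          apply pref_in; auto.
        - exfalso. apply (proj2 (Hpick (pref pick k))). fold (e k). rewrite Heq.
          apply pref_in; auto. }
      assert (HeD : forall k, ~ D (e k)) by (intros k; apply Hpick).
      set (A' := fun z => A z \/ exists k n, z = (e k, n, e (cpair (k, n)))).
      apply (Hmax A').
      + intros x Hx; left; auto.
      + intros Hsub. apply (HeD 0).
        assert (Hz : A (e 0, 0, e (cpair (0,0)))) by (apply Hsub; right; exists 0, 0; auto).
        do 2 eexists; eauto.
      + split; [|split; [|split]].
        * intros a n y [Hz|[k [n0 Hz]]] n'.
          -- destruct (A1 a n y Hz n') as [y' Hy']; exists y'; left; auto.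
          -- injection Hz; intros; subst. exists (e (cpair (k, n'))). right; exists k, n'; auto.
        * intros a n y y' [Hz|[k [n0 Hz]]] [Hz'|[k' [n0' Hz']]].
          -- eauto.
          -- injection Hz'; intros; subst. exfalso; apply (HeD k'); do 2 eexists; eauto.
          -- injection Hz; intros; subst. exfalso; apply (HeD k); do 2 eexists; eauto.
          -- injection Hz; injection Hz'; intros; subst.
             apply He in H4; subst; auto.
        * intros a n a' n' y [Hz|[k [n0 Hz]]] [Hz'|[k' [n0' Hz']]].
          -- eauto.
          -- injection Hz'; intros; subst. exfalso.
             destruct (A4 _ _ _ Hz) as [n1 [y1 Hy1]]. apply (HeD (cpair (k', n0'))). do 2 eexists; eauto.
          -- injection Hz; intros; subst. exfalso.
             destruct (A4 _ _ _ Hz') as [n1 [y1 Hy1]]. apply (HeD (cpair (k, n0))). do 2 eexists; eauto.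
          -- injection Hz; injection Hz'; intros; subst.
             apply He in H2; apply cpair_inj in H2. injection H2; intros; subst; auto.
        * intros a n y [Hz|[k [n0 Hz]]].
          -- destruct (A4 _ _ _ Hz) as [n1 [y1 Hy1]]. exists n1, y1; left; auto.
          -- injection Hz; intros; subst. exists 0, (e (cpair (cpair (k, n0), 0))).
             right; exists (cpair (k, n0)), 0; auto. }
    destruct HLF as [LF HLF].
    assert (Ha0 : exists a0, D a0).
    { apply NNPP; intro Hn. destruct (Hinf LF) as [x Hx]. apply Hx, HLF. intro; apply Hn; eauto. }
    destruct Ha0 as [a0 Ha0].
    assert (Himg : forall a n, exists y, D a -> A (a,n,y)).
    { intros a n. destruct (classic (D a)) as [[n0 [y0 Hd]]|Hd].
      - destruct (A1 _ _ _ Hd n) as [y Hy]; exists y; auto.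
      - exists a; tauto. }
    set (img := fun a n => proj1_sig (constructive_indefinite_description _ (Himg a n))).
    assert (Himg' : forall a n, D a -> A (a, n, img a n)).
    { intros a n; unfold img; destruct (constructive_indefinite_description _ (Himg a n)); auto. }
    exists (fun p : T * nat => let (x, n) := p in
      if excluded_middle_informative (D x) then img x (2 * n)
      else img a0 (S (2 * cpair (idx x LF, n)))).
    intros [x n] [x' n'].
    destruct (excluded_middle_informative (D x)) as [Dx|Dx];
    destruct (excluded_middle_informative (D x')) as [Dx'|Dx']; intros Heq.
    + pose proof (Himg' x (2*n) Dx) as H1. pose proof (Himg' x' (2*n') Dx') as H2.
      rewrite Heq in H1. destruct (A3 _ _ _ _ _ H1 H2). subst. f_equal; lia.
    + pose proof (Himg' x (2*n) Dx) as H1. pose proof (Himg' a0 (S (2 * cpair (idx x' LF, n'))) Ha0) as H2.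
      rewrite Heq in H1. destruct (A3 _ _ _ _ _ H1 H2). lia.
    + pose proof (Himg' a0 (S (2 * cpair (idx x LF, n))) Ha0) as H1. pose proof (Himg' x' (2*n') Dx') as H2.
      rewrite Heq in H1. destruct (A3 _ _ _ _ _ H1 H2). lia.
    + pose proof (Himg' a0 (S (2 * cpair (idx x LF, n))) Ha0) as H1. pose proof (Himg' a0 (S (2 * cpair (idx x' LF, n'))) Ha0) as H2.
      rewrite Heq in H1. destruct (A3 _ _ _ _ _ H1 H2) as [_ Hk].
      assert (Hk' : cpair (idx x LF, n) = cpair (idx x' LF, n')) by lia.
      apply cpair_inj in Hk'. injection Hk'; intros; subst.
      f_equal. apply (idx_inj LF); auto.
Qed.
Lemma level_step {T} (le G : T -> T -> Prop) x y :
  ray_inflation le G x y -> snd y <= S (snd x) /\ snd x <= S (snd y).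
Proof.
  destruct x as [t n], y as [t' m]. unfold ray_inflation, infl_edge0; simpl.
  intros [[[_ ->]|[[-> _]|[-> _]]]|[[_ ->]|[[-> _]|[-> _]]]]; lia.
Qed.

Lemma cross {T} (le G : T -> T -> Prop) (LT : list T) (HLT : forall x, In x LT)
  (rho : nat -> T * nat) : is_ray (ray_inflation le G) rho ->
  forall N, snd (rho 0) <= N -> exists a, snd (rho a) = N.
Proof.
  intros [Hinj He] N H0.
  destruct (pigeon rho Hinj (list_prod LT (seq 0 (S N)))) as [a Ha].
  assert (Hgt : N < snd (rho a)).
  { destruct (rho a) as [s m] eqn:E. simpl. destruct (le_lt_dec m N) as [Hm|Hm]; auto.
    exfalso; apply Ha. apply in_prod; auto. apply in_seq; lia. }
  clear Ha. induction a.
  - lia.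
  - destruct (le_lt_dec (snd (rho a)) N) as [Hm|Hm].
    + exists a. pose proof (level_step le G _ _ (He a)). lia.
    + apply IHa; auto.
Qed.

Lemma finite_case {T} (le G : T -> T -> Prop) (LT : list T) (HLT : forall x, In x LT)
  (I : Type) (F : I -> nat -> T * nat) :
  (forall i, is_ray (ray_inflation le G) (F i)) -> disjoint_family F ->
  exists g : I -> T, forall i j, g i = g j -> i = j.
Proof.
  intros Hr Hd.
  set (dec := fun x y : T => excluded_middle_informative (x = y)).
  set (LTn := nodup dec LT).
  assert (HLTn : forall x, In x LTn) by (intros x; apply nodup_In; auto).
  assert (Hnd : NoDup LTn) by apply NoDup_nodup.
  assert (Hbound : forall li : list I, NoDup li -> length li <= length LTn).
  { intros li Hli.
    set (N := list_max (map (fun i => snd (F i 0)) li)).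
    assert (Hex : forall i, exists a, snd (F i 0) <= N -> snd (F i a) = N).
    { intros i. destruct (le_lt_dec (snd (F i 0)) N) as [Hm|Hm].
      - destruct (cross le G LT HLT (F i) (Hr i) N Hm) as [a Ha]; exists a; auto.
      - exists 0; intros; lia. }
    set (h := fun i => proj1_sig (constructive_indefinite_description _ (Hex i))).
    assert (Hh : forall i, In i li -> snd (F i (h i)) = N).
    { intros i Hi. unfold h; destruct (constructive_indefinite_description _ (Hex i)) as [a Ha]; simpl.
      apply Ha. unfold N.
      assert (H1 : list_max (map (fun i => snd (F i 0)) li) <= list_max (map (fun i => snd (F i 0)) li)) by lia.
      apply list_max_le in H1. rewrite Forall_forall in H1. apply H1.
      apply (in_map (fun i => snd (F i 0))); auto. }
    assert (Hm : NoDup (map (fun i => fst (F i (h i))) li)).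
    { apply NoDup_map_NoDup_ForallPairs; auto. intros i j Hi Hj Heq.
      apply NNPP; intro Hne. apply (Hd i j Hne (h i) (h j)).
      apply injective_projections; auto. rewrite (Hh i Hi), (Hh j Hj); auto. }
    pose proof (NoDup_incl_length Hm (fun x _ => HLTn x)) as Hl.
    rewrite length_map in Hl; auto. }
  assert (Hmaxk : forall d k, (exists li : list I, NoDup li /\ length li = k) -> length LTn - k <= d ->
     exists li : list I, NoDup li /\ forall li' : list I, NoDup li' -> length li' <= length li).
  { induction d; intros k [li [Hli Hk]] Hd0.
    - exists li; split; auto. intros li' Hli'. pose proof (Hbound li' Hli').
      pose proof (Hbound li Hli). lia.
    - destruct (classic (exists li' : list I, NoDup li' /\ length li < length li')) as [[li' [Hli' Hlt]]|Hno].
      + apply (IHd (length li')); eauto. pose proof (Hbound li' Hli'). lia.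
      + exists li; split; auto. intros li' Hli'. apply NNPP; intro Hc. apply Hno.
        exists li'; split; auto; lia. }
  destruct (Hmaxk (length LTn) 0 (ex_intro _ [] (conj (NoDup_nil _) eq_refl)) ltac:(lia)) as [LI [HLI Hmx]].
  assert (Hall : forall i, In i LI).
  { intros i. apply NNPP; intro Hi. pose proof (Hmx (i :: LI) (NoDup_cons _ Hi HLI)). simpl in *; lia. }
  destruct LTn as [|t0 rest] eqn:ELT.
  - exists (fun i => fst (F i 0)). intros i. exfalso. apply (HLTn (fst (F i 0))).
  - exists (fun i => nth (idx i LI) (t0 :: rest) t0).
    intros i j Heq. apply (idx_inj LI); auto.
    pose proof (Hbound LI HLI).
    apply (proj1 (NoDup_nth (t0 :: rest) t0) Hnd); auto;
      (eapply Nat.lt_le_trans; [apply idx_lt; auto| auto]).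
Qed.

Lemma horiz_is_ray {T} (le G : T -> T -> Prop) t : is_ray (ray_inflation le G) (horizontal_ray t).
Proof.
  split.
  - intros m n Heq; injection Heq; auto.
  - intros n; left; simpl; left; auto.
Qed.

Theorem lemma6p2 (T : Type) (le : T -> T -> Prop) (G : T -> T -> Prop) :
  order_tree le -> height_le_omega1 le -> T_graph le G -> sparse le G ->
  let H := ray_inflation le G in
  (* the horizontal rays are pairwise disjoint rays, all in the same end *)
  (forall t, is_ray H (horizontal_ray t)) /\
  (forall t t', ray_equiv H (horizontal_ray t) (horizontal_ray t')) /\
  (* this end is the only end *)
  (forall r, is_ray H r -> forall t, ray_equiv H r (horizontal_ray t)) /\
  (* its degree is |T| *)
  (forall t, end_degree_is H (horizontal_ray t) T).
Proof.
  intros OT _ _ SP; cbv zeta.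
  split; [intros t; apply horiz_is_ray|].
  split; [intros t t'; apply equiv_lemma; auto; apply horiz_is_ray|].
  split; [intros r Hr t; apply equiv_lemma; auto|].
  intros t; split.
  - exists (fun a => horizontal_ray a). split.
    + intros a; split; [apply horiz_is_ray|]. apply equiv_lemma; auto; apply horiz_is_ray.
    + intros i j Hne m n Heq; injection Heq; auto.
  - intros I F HF Hd.
    destruct (classic (exists LT : list T, forall x, In x LT)) as [[LT HLT]|Hinf].
    + exact (finite_case le G LT HLT I F (fun i => proj1 (HF i)) Hd).
    + assert (Hinf' : forall l : list T, exists x, ~ In x l).
      { intros l. apply NNPP; intro Hn. apply Hinf. exists l. intros x.
        apply NNPP; intro Hx. apply Hn; exists x; exact Hx. }
      destruct (card_TxN T Hinf') as [g0 Hg0].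
      exists (fun i => g0 (F i 0)). intros i j Heq. apply Hg0 in Heq.
      apply NNPP; intro Hne. exact (Hd i j Hne 0 0 Heq).
Qed.
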